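(* Let $X$ be a real Hilbert space and $A,B$ closed convex nonempty subsets of $X$ such that $E$ and $F$ are nonempty and bounded. Let $\{A_n\}$, $\{B_n\}$ be sequences of closed convex nonempty subsets of $X$ with $A_n\to A$ and $B_n\to B$ in the Attouch–Wets sense. Then for each $M>0$ there exist $\theta\in(0,M)$ and $n_0\in\mathbb N$ such that for every $n\ge n_0$: (i) if $b_n\in B_n$, $a_n=P_{A_n}b_n$ and $\mathrm{dist}(b_n,F)\le\theta$, then $\mathrm{dist}(a_n,E)\le 2M$; (ii) if $a_n\in A_n$, $b_{n+1}=P_{B_{n+1}}a_n$ and $\mathrm{dist}(a_n,E)\le\theta$, then $\mathrm{dist}(b_{n+1},F)\le 2M$.
   Context: $P_C$ is the metric projection onto a closed convex nonempty set $C$; $B_X$ the closed unit ball; $\mathrm{dist}(x,S)=\inf_{s\in S}\|x-s\|$, $\mathrm{dist}(S,T)=\inf_{s\in S}\mathrm{dist}(s,T)$. $E=\{a\in A:\mathrm{dist}(a,B)=\mathrm{dist}(A,B)\}$, $F=\{b\in B:\mathrm{dist}(b,A)=\mathrm{dist}(A,B)\}$. Attouch–Wets convergence: for nonempty closed $C,D$ and $N\in\mathbb N$ let $e_N(C,D)=\sup_{c\in C\cap NB_X}\mathrm{dist}(c,D)$ ($0$ if $C\cap NB_X=\emptyset$) and $h_N(C,D)=\max\{e_N(C,D),e_N(D,C)\}$; $C_j\to C$ if $\lim_j h_N(C_j,C)=0$ for every $N\in\mathbb N$. *)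

(* Defs.v *)
From HB Require Import structures.
From mathcomp Require Import all_boot all_order all_algebra.
From mathcomp Require Import all_classical all_reals all_analysis.
Set Implicit Arguments. Unset Strict Implicit. Unset Printing Implicit Defensive.
Import Order.TTheory GRing.Theory Num.Theory.
Import numFieldNormedType.Exports.
Local Open Scope classical_set_scope.
Local Open Scope ring_scope.

(* A real Hilbert space: a complete normed space over R whose norm comes from
   an inner product ip (symmetric, bilinear, <x,x> = |x|^2). *)
Definition inner_product (R : realType) (V : normedModType R) (ip : V -> V -> R) :=
  [/\ (forall x y, ip x y = ip y x),
      (forall (a : R) (x y z : V), ip (a *: x + y) z = a * ip x z + ip y z) &
      (forall x, ip x x = `|x| ^+ 2)].

Definition ccn (R : realType) (V : normedModType R) (C : set V) :=
  [/\ closed C, convex_set (C : set (convex_lmodType V)) & C !=set0].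

Definition dist (R : realType) (V : normedModType R) (x : V) (S : set V) : R :=
  inf [set `|x - s| | s in S].

Definition dist_sets (R : realType) (V : normedModType R) (S T : set V) : R :=
  inf [set dist s T | s in S].

Definition best_set (R : realType) (V : normedModType R) (A B : set V) : set V :=
  [set a | A a /\ dist a B = dist_sets A B].

Definition best_set_F (R : realType) (V : normedModType R) (A B : set V) : set V :=
  [set b | B b /\ dist b A = dist_sets A B].

Definition is_proj (R : realType) (V : normedModType R) (C : set V) (x a : V) :=
  C a /\ forall c, C c -> `|x - a| <= `|x - c|.

Definition excess (R : realType) (V : normedModType R) (N : nat) (C D : set V) : R :=
  let CN := C `&` [set x | `|x| <= N%:R] in
  if `[< CN = set0 >] then 0 else sup [set dist c D | c in CN].

Definition hN (R : realType) (V : normedModType R) (N : nat) (C D : set V) : R :=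
  Num.max (excess N C D) (excess N D C).

Definition AW_cvg (R : realType) (V : normedModType R) (Cs : nat -> set V) (C : set V) :=
  forall N : nat, (fun j => hN N (Cs j) C) @ \oo --> (0 : R).

(* Main.v *)
Require Import Defs.
From HB Require Import structures.
From mathcomp Require Import all_boot all_order all_algebra.
From mathcomp Require Import all_classical all_reals all_analysis.
From mathcomp Require Import ring lra.
Import Order.TTheory GRing.Theory Num.Theory.
Import numFieldNormedType.Exports.
Local Open Scope classical_set_scope.
Local Open Scope ring_scope.
Set Implicit Arguments. Unset Strict Implicit.

Section Basics.
Variables (R : realType) (X : normedModType R) (ip : X -> X -> R).
Hypothesis hip : inner_product ip.

Lemma ipD x y z : ip (x + y) z = ip x z + ip y z.
Proof. by move: hip => [_ h _]; have := h 1 x y z; rewrite scale1r mul1r. Qed.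

Lemma ip0 z : ip 0 z = 0.
Proof.
have := ipD 0 0 z; rewrite addr0 => h.
by apply: (addrI (ip 0 z)); rewrite addr0 -h.
Qed.

Lemma ipN x z : ip (- x) z = - ip x z.
Proof.
by move: hip => [_ h _]; have := h (-1) x 0 z; rewrite addr0 scaleN1r ip0 addr0 mulN1r.
Qed.

Lemma ipC x y : ip x y = ip y x.
Proof. by move: hip => [h _ _]. Qed.

Lemma ipn (x : X) : ip x x = `|x| ^+ 2.
Proof. by move: hip => [_ _ h]. Qed.

Lemma normD2 (x y : X) : `|x + y| ^+ 2 = `|x| ^+ 2 + 2 * ip x y + `|y| ^+ 2.
Proof.
rewrite -!ipn !ipD (ipC x (x + y)) (ipC y (x + y)) !ipD (ipC y x); ring.
Qed.

Lemma paral (x y : X) : `|x + y| ^+ 2 + `|x - y| ^+ 2 = 2 * `|x| ^+ 2 + 2 * `|y| ^+ 2.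
Proof.
rewrite !normD2 normrN.
have -> : ip x (- y) = - ip x y by rewrite ipC ipN ipC.
ring.
Qed.

Lemma mid (C : set X) (p q : X) :
  convex_set (C : set (convex_lmodType X)) -> C p -> C q -> C (2^-1 *: (p + q)).
Proof.
move=> cC Cp Cq.
have h0 : (0 <= (2^-1 : R))%R by rewrite invr_ge0.
have h1 : ((2^-1 : R) <= 1)%R by rewrite invf_le1 ?ler1n.
pose l : {i01 R} := Itv01 h0 h1.
have := cC p q l; rewrite !inE => /(_ Cp Cq).
congr C; rewrite /= scalerDr; congr (_ + _); congr (_ *: _).
rewrite /unstable.onem /=; lra.
Qed.

Lemma par (C : set X) (x p q : X) (dl : R) :
  convex_set (C : set (convex_lmodType X)) -> C p -> C q -> 0 <= dl ->
  (forall m, C m -> dl <= `|x - m|) ->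
  `|p - q| ^+ 2 <= 2 * `|x - p| ^+ 2 + 2 * `|x - q| ^+ 2 - 4 * dl ^+ 2.
Proof.
move=> cC Cp Cq dl0 hdl.
have hm := hdl _ (mid cC Cp Cq).
have e1 : (x - p) + (x - q) = 2 *: (x - 2^-1 *: (p + q)).
  rewrite scalerBr scalerA mulfV ?pnatr_eq0 // scale1r scaler_nat.
  by rewrite mulr2n opprD !addrA; congr (_ + _); rewrite -!addrA; congr (_ + _); rewrite addrC.
have e2 : (x - p) - (x - q) = q - p by rewrite opprB addrC addrA subrK.
have := paral (x - p) (x - q); rewrite e1 e2 normrZ ger0_norm // (distrC q p).
have h2 : dl ^+ 2 <= `|x - 2^-1 *: (p + q)| ^+ 2.
  by rewrite lerXn2r // nnegrE.
move=> h; nra.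
Qed.

End Basics.


Section Dist.
Variables (R : realType) (X : normedModType R).

Lemma dist_hlb (x : X) S : has_lbound [set `|x - s| | s in S].
Proof. by exists 0 => _ [s _ <-]. Qed.

Lemma dist_le (x : X) S s : S s -> dist x S <= `|x - s|.
Proof. by move=> Ss; apply: ge_inf; [exact: dist_hlb | exists s]. Qed.

Lemma dist_lb (x : X) S dl : S !=set0 -> (forall s, S s -> dl <= `|x - s|) ->
  dl <= dist x S.
Proof.
move=> [s Ss] h; apply: lb_le_inf; first by exists `|x - s|, s.
by move=> _ [t St <-]; exact: h.
Qed.

Lemma dist_ge0 (x : X) S : S !=set0 -> 0 <= dist x S.
Proof. by move=> S0; apply: dist_lb. Qed.

Lemma dist_approx (x : X) S eps : S !=set0 -> 0 < eps ->
  exists2 s, S s & `|x - s| < dist x S + eps.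
Proof.
move=> [s0 Ss0] e0.
have [_ [s Ss <-] h] := inf_adherent e0 (conj (ex_intro _ `|x - s0| (ex_intro2 _ _ s0 Ss0 erefl)) (dist_hlb x S)).
by exists s.
Qed.

End Dist.


Lemma arch_inv (R : realType) (t : R) : 0 < t -> exists N : nat, N.+1%:R^-1 < t.
Proof.
move=> t0; exists (Num.Def.trunc t^-1).
by rewrite -ltf_pV2 ?(posrE,divr_gt0) ?invr_gt0 ?ltr0n // invrK truncnS_gt.
Qed.

Lemma inv_anti (R : realType) (n m : nat) : (n <= m)%N -> m.+1%:R^-1 <= n.+1%:R^-1 :> R.
Proof. by move=> nm; rewrite lef_pV2 ?posrE ?ltr0n // ler_nat ltnS. Qed.

Section Proj.
Variables (R : realType) (X : completeNormedModType R) (ip : X -> X -> R).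
Hypothesis hip : inner_product ip.

Lemma proj_ex (C : set X) (x : X) : ccn C -> exists p, is_proj C x p.
Proof.
move=> [clC cvC C0].
set d := dist x C.
have d0 : 0 <= d := dist_ge0 x C0.
have hc : forall n : nat, exists c, C c /\ `|x - c| < d + n.+1%:R^-1.
  move=> n; have e0 : 0 < n.+1%:R^-1 :> R by rewrite invr_gt0 ltr0n.
  by have [c Cc h] := dist_approx x C0 e0; exists c.
have [c hcn] := choice hc.
have hd : forall m, C m -> d <= `|x - m| by move=> m Cm; exact: dist_le.
have key : forall n m, (n <= m)%N -> `|c n - c m| ^+ 2 <= 4 * (2 * d + 1) * n.+1%:R^-1.
  move=> n m nm.
  have [Cn hn] := hcn n; have [Cm hm] := hcn m.
  have := par hip cvC Cn Cm d0 hd.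
  have em := inv_anti R nm.
  have en0 : 0 < n.+1%:R^-1 :> R by rewrite invr_gt0 ltr0n.
  have en1 : n.+1%:R^-1 <= 1 :> R by rewrite invf_le1 ?ltr0n // ler1n.
  move: hn hm em en0 en1; set en := n.+1%:R^-1; set em := m.+1%:R^-1.
  have := normr_ge0 (x - c n); have := normr_ge0 (x - c m).
  move=> h1 h2 h3 h4 h5 h6 h7 h8; nra.
have cc : cauchy_ex (c @ \oo).
  move=> e e0.
  have t0 : 0 < e ^+ 2 / (4 * (2 * d + 1)) by rewrite divr_gt0 ?exprn_gt0 //; lra.
  have [N hN] := arch_inv t0.
  exists (c N); exists N => // m /= Nm.
  rewrite -ball_normE /ball_ /=.
  have := key N m Nm.
  rewrite ltr_pdivlMr in hN; last by lra.
  have := normr_ge0 (c N - c m).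
  move=> h1 h2; have h3 : `|c N - c m| ^+ 2 < e ^+ 2 by apply: le_lt_trans h2 _; rewrite mulrC. 
  nra.
have cv : cvg (c @ \oo) by apply: cauchy_cvg; apply: cauchy_exP.
exists (lim (c @ \oo)); split.
  apply: (closed_cvg C clC _ _ cv).
  by apply: nearW => n; have [] := hcn n.
move=> c' Cc'; apply: le_trans (hd _ Cc').
apply/ler_addgt0Pr => e e0.
have : closed_ball x (d + e) (lim (c @ \oo)).
  apply: (closed_cvg _ (@closed_ball_closed _ _ x (d + e)) _ _ cv).
  have [N hN] := arch_inv e0.
  exists N => // n /= Nn.
  rewrite closed_ballE /closed_ball_ /=; last by lra.
  have [_ h] := hcn n.
  apply/ltW; apply: (lt_le_trans h); rewrite lerD2l; exact: (le_trans (inv_anti R Nn) (ltW hN)).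
by rewrite closed_ballE /closed_ball_ /=; last by lra.
Qed.
End Proj.


Section Ex.
Variables (R : realType) (X : normedModType R).

Lemma bnd (A : set X) : bounded_set A -> exists r, forall a, A a -> `|a| <= r.
Proof.
move=> [M [_ HM]]; exists (M + 1) => a Aa.
by apply: (HM (M + 1) _ a Aa); rewrite ltrDl.
Qed.

Lemma excess_pt (N : nat) (C D : set X) c eps :
  C c -> `|c| <= N%:R -> D !=set0 -> excess N C D < eps ->
  exists2 q, D q & `|c - q| < eps.
Proof.
move=> Cc cN D0 hex.
have CN : (C `&` [set x | `|x| <= N%:R]) c by split.
have hsup : dist c D <= sup [set dist c' D | c' in C `&` [set x | `|x| <= N%:R]].
  case: D0 => d0 Dd0.
  apply: sup_upper_bound; last by exists c.
  split; first by exists (dist c D), c.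
  exists (N%:R + `|d0|) => _ [c' [_ hc'] <-].
  apply: le_trans (dist_le c' Dd0) _.
  apply: le_trans (ler_normB c' d0) _.
  by rewrite lerD2r.
move: hex; rewrite /excess asboolF; last first.
  by move=> h; rewrite h in CN.
move=> hex.
have e0 : 0 < eps - dist c D by rewrite subr_gt0; exact: le_lt_trans hsup hex.
have [q Dq hq] := dist_approx c D0 e0.
by exists q => //; move: hq; rewrite addrCA subrr addr0.
Qed.

End Ex.


Lemma tri (R : realType) (X : normedModType R) (x y z : X) :
  `|x - z| <= `|x - y| + `|y - z|.
Proof. by have := ler_normD (x - y) (y - z); rewrite addrA subrK. Qed.

Lemma num_step (R : realType) (u v z d s0 M : R) :
  0 <= z -> 0 <= v -> u < d + s0 -> d - s0 < v -> v <= u ->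
  z ^+ 2 <= 2 * v ^+ 2 + 2 * u ^+ 2 - 4 * v ^+ 2 ->
  s0 * 8 * (d + 1) <= M ^+ 2 -> 0 < s0 -> s0 <= 1 -> 0 <= d -> 0 < M -> z <= M.
Proof.
move=> z0 v0 hu hv vu hz hs s00 s01 d0 M0.
have hz2 : z ^+ 2 <= M ^+ 2.
  case: (lerP (d - s0) 0) => hds.
    nra.
  nra.
nra.
Qed.

Lemma core (R : realType) (X : completeNormedModType R) (ip : X -> X -> R)
  (hip : inner_product ip) (C : set X) (Cs : nat -> set X) (S T : set X) (d : R) :
  ccn C -> (forall n, ccn (Cs n)) -> AW_cvg Cs C ->
  S !=set0 -> bounded_set S -> bounded_set T ->
  (forall f, S f -> dist f C = d) ->
  (forall f c, S f -> C c -> `|f - c| = d -> T c) ->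
  forall M, 0 < M -> exists theta, exists n0, 0 < theta /\ theta < M /\
  forall n, (n0 <= n)%N -> forall b a, is_proj (Cs n) b a ->
    dist b S <= theta -> dist a T <= 2 * M.
Proof.
move=> hC hCs hAW S0 hSb hTb hSd hT M M0.
have [f0 Sf0] := S0.
have C0 : C !=set0 by case: hC.
have d0 : 0 <= d by rewrite -(hSd f0 Sf0); apply: dist_ge0.
have [RS hRS] := bnd hSb; have [RT hRT] := bnd hTb.
set s0 := Num.min (Num.min 1 (M ^+ 2 / (8 * (d + 1)))) M.
have hd1 : 0 < 8 * (d + 1) by lra.
have s00 : 0 < s0 by rewrite !lt_min ltr01 M0 divr_gt0 ?exprn_gt0.
have s01 : s0 <= 1 by rewrite !ge_min lexx.
have s0M : s0 <= M by rewrite !ge_min lexx orbT.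
have s0d : s0 * 8 * (d + 1) <= M ^+ 2.
  have : s0 <= M ^+ 2 / (8 * (d + 1)) by rewrite !ge_min lexx orbT.
  by rewrite ler_pdivlMr // mulrA.
set K := `|RT| + `|RS| + d + 2.
set N := (Num.Def.trunc K).+1.
have hK : K < N%:R by exact: truncnS_gt.
have s020 : 0 < s0 / 2 by lra.
have [n0 _ hn0] := (cvgrPdist_lt _ _).1 (hAW N) _ s020.
exists (s0 / 4), n0; split; first lra; split; first lra.
move=> n nn0 b a [Csa hpa] hb.
have h1 : `|0 - hN N (Cs n) C| < s0 / 2 := hn0 n nn0.
rewrite sub0r normrN in h1.
have hx1 : excess N C (Cs n) < s0 / 2.
  apply: le_lt_trans h1; apply: le_trans (ler_norm _); rewrite /hN.
  by rewrite le_max lexx orbT.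
have hx2 : excess N (Cs n) C < s0 / 2.
  apply: le_lt_trans h1; apply: le_trans (ler_norm _); rewrite /hN.
  by rewrite le_max lexx.
have s040 : 0 < s0 / 4 by lra.
have [f Sf hbf] := dist_approx b S0 s040.
have hbf' : `|b - f| < s0 / 2 by lra.
have [e [Ce he]] := proj_ex hip f hC.
have hfe : `|f - e| = d.
  apply/eqP; rewrite eq_le; apply/andP; split.
    by rewrite -(hSd f Sf); apply: dist_lb.
  by rewrite -(hSd f Sf); apply: dist_le.
have Te := hT f e Sf Ce hfe.
have eN : `|e| <= N%:R.
  apply: le_trans (hRT e Te) _; apply: le_trans (ler_norm RT) _.
  rewrite ltW //; apply: le_lt_trans hK; rewrite /K.
  have := normr_ge0 RS; lra.
have Csn0 : Cs n !=set0 by case: (hCs n).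
have [q Csq heq] := excess_pt Ce eN Csn0 hx1.
have hba := hpa q Csq.
have hbq : `|b - q| < d + s0.
  have := tri b f e; have := tri b e q; lra.
have aN : `|a| <= N%:R.
  have ha : `|a| <= `|b| + `|b - a|.
    by have := ler_normB b (b - a); rewrite opprB addrCA subrr addr0.
  have hbb : `|b| <= `|f| + `|b - f|.
    by have := ler_normD f (b - f); rewrite addrCA subrr addr0.
  have hKa : `|a| < K.
    have := hRS f Sf; have := ler_norm RS; rewrite /K.
    have := normr_ge0 RT; lra.
  exact: ltW (lt_trans hKa hK).
have [q' Cq' haq'] := excess_pt Csa aN C0 hx2.
have hfq' : d <= `|f - q'| by rewrite -(hSd f Sf); apply: dist_le.
have hba' : d - s0 < `|b - a|.
  have := tri f b q'; have := tri b a q'; rewrite (distrC f b); lra.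
have cvx : convex_set (Cs n : set (convex_lmodType X)) by case: (hCs n).
have hpar := par hip cvx Csa Csq (normr_ge0 (b - a)) hpa.
have haq : `|a - q| <= M.
  exact: (num_step (normr_ge0 _) (normr_ge0 _) hbq hba' hba hpar s0d s00 s01 d0 M0).
apply: le_trans (dist_le a Te) _.
have := tri a q e; rewrite (distrC q e); lra.
Qed.

Unset Implicit Arguments. Set Strict Implicit.

Theorem proposition4p9 (R : realType) (X : completeNormedModType R)
  (ip : X -> X -> R) (hip : inner_product ip)
  (A B : set X) (hA : ccn A) (hB : ccn B)
  (hE0 : best_set A B !=set0) (hF0 : best_set_F A B !=set0)
  (hEb : bounded_set (best_set A B)) (hFb : bounded_set (best_set_F A B))
  (As Bs : nat -> set X) (hAs : forall n, ccn (As n)) (hBs : forall n, ccn (Bs n))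
  (hAcvg : AW_cvg As A) (hBcvg : AW_cvg Bs B) :
  forall M : R, 0 < M ->
  exists theta : R, exists n0 : nat, 0 < theta /\ theta < M /\
  forall n : nat, (n0 <= n)%N ->
    (forall bn an : X, Bs n bn -> is_proj (As n) bn an ->
       dist bn (best_set_F A B) <= theta -> dist an (best_set A B) <= 2 * M) /\
    (forall an bn1 : X, As n an -> is_proj (Bs n.+1) an bn1 ->
       dist an (best_set A B) <= theta -> dist bn1 (best_set_F A B) <= 2 * M).
Proof.
move=> M M0.
have A0 : A !=set0 by case: hA.
have B0 : B !=set0 by case: hB.
have hdle : forall a, A a -> dist_sets A B <= dist a B.
  move=> a Aa; apply: ge_inf; last by exists a.
  by exists 0 => _ [s _ <-]; apply: dist_ge0.
have h1 : forall f, best_set_F A B f -> dist f A = dist_sets A B by move=> f [].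
have h2 : forall f c, best_set_F A B f -> A c -> `|f - c| = dist_sets A B -> best_set A B c.
  move=> f c [Bf _] Ac hfc; split => //.
  apply/eqP; rewrite eq_le hdle // andbT.
  by rewrite -hfc distrC; apply: dist_le.
have h3 : forall e, best_set A B e -> dist e B = dist_sets A B by move=> e [].
have h4 : forall e c, best_set A B e -> B c -> `|e - c| = dist_sets A B -> best_set_F A B c.
  move=> e c [Ae _] Bc hec; split => //.
  apply/eqP; rewrite eq_le; apply/andP; split.
    by rewrite -hec distrC; apply: dist_le.
  apply: dist_lb => // a Aa; rewrite distrC.
  by apply: le_trans (hdle a Aa) _; apply: dist_le.
have [t1 [n1 [t10 [t1M H1]]]] := core hip hA hAs hAcvg hF0 hFb hEb h1 h2 M0.
have [t2 [n2 [t20 [t2M H2]]]] := core hip hB hBs hBcvg hE0 hEb hFb h3 h4 M0.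
exists (Num.min t1 t2), (maxn n1 n2); split; first by rewrite lt_min t10.
split; first by rewrite gt_min t1M.
move=> n nn; split.
  move=> bn an _ hp hd; apply: (H1 n _ bn an hp).
    by apply: leq_trans nn; rewrite leq_maxl.
  by apply: le_trans hd _; rewrite ge_min lexx.
move=> an bn1 _ hp hd; apply: (H2 n.+1 _ an bn1 hp).
  by apply: leq_trans (leqnSn n); apply: leq_trans nn; rewrite leq_maxr.
by apply: le_trans hd _; rewrite ge_min lexx orbT.
Qed.
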